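(* For every real number $\varepsilon>0$ there exists a set $S\subseteq\mathbb{Z}^{2}$ of lattice points in general position (no three points of $S$ lie on a common line) such that $$\left|S\cap[1,n]^{2}\right|=\Theta\!\left(\frac{n}{\log^{1+\varepsilon}n}\right).$$ In particular, $$\liminf_{n\to\infty}\frac{\left|S\cap[1,n]^{2}\right|}{n/\log^{1+\varepsilon}n}>0.$$
   Context: $[1,n]^2$ denotes the set of lattice points $(x,y)\in\mathbb{Z}^2$ with $1\le x,y\le n$. *)

(* Defs.v *)
From Stdlib Require Import Reals ZArith List.
Import ListNotations.
Open Scope R_scope.

(* A subset S of Z^2 is represented by its (classical) characteristic
   function S : Z -> Z -> bool. *)

(* p, q, r are collinear iff the cross product (q - p) x (r - p) is 0. *)
Definition collinear (p q r : Z * Z) : Prop :=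
  ((fst q - fst p) * (snd r - snd p) - (snd q - snd p) * (fst r - fst p))%Z = 0%Z.

Definition general_position (S : Z -> Z -> bool) : Prop :=
  forall p q r : Z * Z,
    S (fst p) (snd p) = true -> S (fst q) (snd q) = true -> S (fst r) (snd r) = true ->
    p <> q -> q <> r -> p <> r -> ~ collinear p q r.

Definition grid (n : nat) : list (Z * Z) :=
  list_prod (map Z.of_nat (seq 1 n)) (map Z.of_nat (seq 1 n)).

Definition count_in_box (S : Z -> Z -> bool) (n : nat) : nat :=
  length (filter (fun p => S (fst p) (snd p)) (grid n)).

(* Main.v *)
Require Import Defs.
From Stdlib Require Import Reals ZArith List Lia Lra Psatz ClassicalEpsilon.
Import ListNotations.
Open Scope R_scope. Open Scope bool_scope.

Fixpoint sumR {A} (f : A -> R) (l : list A) : R :=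
  match l with [] => 0 | x :: l' => f x + sumR f l' end.

Lemma sumR_app {A} (f : A -> R) l1 l2 : sumR f (l1 ++ l2) = sumR f l1 + sumR f l2.
Proof. induction l1; simpl; lra. Qed.

Lemma sumR_nonneg {A} (f : A -> R) l : (forall x, In x l -> 0 <= f x) -> 0 <= sumR f l.
Proof. induction l; simpl; intros H; [lra|]. 
  assert (0 <= f a) by (apply H; auto). assert (0 <= sumR f l) by (apply IHl; auto). lra. Qed.

Lemma sumR_le {A} (f g : A -> R) l : (forall x, In x l -> f x <= g x) -> sumR f l <= sumR g l.
Proof. induction l; simpl; intros H; [lra|].
  assert (f a <= g a) by (apply H; auto). assert (sumR f l <= sumR g l) by (apply IHl; auto). lra. Qed.

Lemma sumR_const_le {A} (f : A -> R) l c : (forall x, In x l -> f x <= c) -> sumR f l <= INR (length l) * c.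
Proof. induction l; cbn [sumR length]; intros H. simpl; lra. rewrite S_INR.
  assert (f a <= c) by (apply H; simpl; auto). assert (sumR f l <= INR (length l) * c) by (apply IHl; intros; apply H; simpl; auto). 
  rewrite Rmult_plus_distr_r. lra. Qed.

Lemma sumR_plus {A} (f g : A -> R) l : sumR (fun x => f x + g x) l = sumR f l + sumR g l.
Proof. induction l; simpl; lra. Qed.

Lemma sumR_scal {A} (f : A -> R) l c : sumR (fun x => c * f x) l = c * sumR f l.
Proof. induction l; simpl; [lra|]. rewrite IHl. lra. Qed.

Lemma sumR_map {A B} (f : B -> R) (g : A -> B) l : sumR f (map g l) = sumR (fun x => f (g x)) l.
Proof. induction l; simpl; congruence. Qed.

Lemma sumR_swap {A B} (f : A -> B -> R) l1 l2 :
  sumR (fun x => sumR (fun y => f x y) l2) l1 = sumR (fun y => sumR (fun x => f x y) l1) l2.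
Proof. induction l1; simpl.
  - induction l2; simpl; lra.
  - rewrite IHl1. rewrite <- sumR_plus. reflexivity. Qed.

Lemma sumR_prod {A B} (f : A * B -> R) l1 l2 :
  sumR f (list_prod l1 l2) = sumR (fun x => sumR (fun y => f (x, y)) l2) l1.
Proof. induction l1; simpl; auto. rewrite sumR_app, sumR_map, IHl1. reflexivity. Qed.

Lemma sumR_filter_le {A} (f : A -> R) (P : A -> bool) l :
  (forall x, In x l -> P x = false -> f x <= 0) -> sumR f l <= sumR f (filter P l).
Proof. induction l; simpl; intros H; [lra|].
  assert (sumR f l <= sumR f (filter P l)) by (apply IHl; auto).
  destruct (P a) eqn:E; simpl; [lra|]. assert (f a <= 0) by (apply H; auto). lra. Qed.

Lemma sumR_filter_ge {A} (f : A -> R) (P : A -> bool) l :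
  (forall x, In x l -> 0 <= f x) -> sumR f (filter P l) <= sumR f l.
Proof. induction l; simpl; intros H; [lra|].
  assert (sumR f (filter P l) <= sumR f l) by (apply IHl; auto).
  assert (0 <= f a) by (apply H; auto).
  destruct (P a); simpl; lra. Qed.

Lemma sumR_incl {A} (f : A -> R) l1 l2 :
  NoDup l1 -> incl l1 l2 -> (forall x, In x l2 -> 0 <= f x) -> sumR f l1 <= sumR f l2.
Proof. revert l2. induction l1 as [|a l1 IH]; intros l2 Hn Hi Hf; simpl.
  - apply sumR_nonneg; auto.
  - inversion Hn; subst.
    assert (Ha : In a l2) by (apply Hi; simpl; auto).
    destruct (in_split a l2 Ha) as [L1 [L2 E]]. subst l2.
    assert (sumR f l1 <= sumR f (L1 ++ L2)).
    { apply IH; auto.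
      - intros x Hx. assert (In x (L1 ++ a :: L2)) by (apply Hi; simpl; auto).
        apply in_app_or in H. apply in_or_app. destruct H as [H|[H|H]]; auto. subst; contradiction.
      - intros x Hx. apply Hf. apply in_app_or in Hx. apply in_or_app. simpl. tauto. }
    rewrite sumR_app in *. simpl. lra. Qed.

Lemma sumR_inj {A B} (f : A -> R) (P : A -> bool) (g : A -> B) (G : B -> R) l l' :
  NoDup l ->
  (forall x, In x l -> P x = false -> f x <= 0) ->
  (forall x, In x l -> P x = true -> In (g x) l' /\ f x <= G (g x)) ->
  (forall x y, In x l -> In y l -> P x = true -> P y = true -> g x = g y -> x = y) ->
  (forall y, In y l' -> 0 <= G y) ->
  sumR f l <= sumR G l'.
Proof. intros Hn H0 H1 Hinj HG.
  eapply Rle_trans. apply (sumR_filter_le f P l H0).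
  eapply Rle_trans. apply (sumR_le f (fun x => G (g x))).
  { intros x Hx. apply filter_In in Hx. apply H1; tauto. }
  rewrite <- sumR_map. apply sumR_incl; auto.
  - apply NoDup_map_NoDup_ForallPairs. 
    + intros x y Hx Hy E. apply filter_In in Hx. apply filter_In in Hy. apply Hinj; tauto.
    + apply NoDup_filter; auto.
  - intros y Hy. apply in_map_iff in Hy. destruct Hy as [x [E Hx]]. subst. apply filter_In in Hx. apply H1; tauto.
Qed.

Lemma sumR_one {A} (f : A -> R) l x : In x l -> (forall y, In y l -> 0 <= f y) -> f x <= sumR f l.
Proof. induction l; simpl; intros Hx H; [contradiction|].
  destruct Hx as [E|Hx].
  - subst. assert (0 <= sumR f l) by (apply sumR_nonneg; auto). lra.
  - assert (f x <= sumR f l) by (apply IHl; auto). assert (0 <= f a) by (apply H; auto). lra. Qed.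

Lemma length_filter_orb {A} (P Q : A -> bool) l :
  (length (filter (fun x => orb (P x) (Q x)) l) <= length (filter P l) + length (filter Q l))%nat.
Proof. induction l; simpl; auto. destruct (P a), (Q a); simpl; lia. Qed.

Lemma length_filter_inj {A B} (P : A -> bool) (g : A -> B) l l' :
  NoDup l ->
  (forall x, In x l -> P x = true -> In (g x) l') ->
  (forall x y, In x l -> In y l -> P x = true -> P y = true -> g x = g y -> x = y) ->
  (length (filter P l) <= length l')%nat.
Proof. intros Hn H1 Hinj.
  rewrite <- (length_map g). apply NoDup_incl_length.
  - apply NoDup_map_NoDup_ForallPairs.
    + intros x y Hx Hy E. apply filter_In in Hx. apply filter_In in Hy. apply Hinj; tauto.
    + apply NoDup_filter; auto.
  - intros y Hy. apply in_map_iff in Hy. destruct Hy as [x [E Hx]]. subst. apply filter_In in Hx. apply H1; tauto.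
Qed.

Lemma NoDup_prod {A B} (l1 : list A) (l2 : list B) : NoDup l1 -> NoDup l2 -> NoDup (list_prod l1 l2).
Proof. induction l1; simpl; intros H1 H2. constructor.
  inversion H1; subst. apply NoDup_app; auto.
  - apply NoDup_map_NoDup_ForallPairs; auto. intros x y _ _ E. congruence.
  - intros [x y] Hx Hy. apply in_map_iff in Hx. destruct Hx as [z [E _]]. inversion E; subst.
    apply in_prod_iff in Hy. tauto. Qed.

Definition zr (lo : Z) (n : nat) : list Z := map (fun i => (lo + Z.of_nat i)%Z) (seq 0 n).

Lemma zr_In lo n x : In x (zr lo n) <-> (lo <= x < lo + Z.of_nat n)%Z.
Proof. unfold zr. rewrite in_map_iff. split.
  - intros [i [E Hi]]. apply in_seq in Hi. lia.
  - intros H. exists (Z.to_nat (x - lo)). split. lia. apply in_seq. lia. Qed.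

Lemma zr_NoDup lo n : NoDup (zr lo n).
Proof. unfold zr. apply NoDup_map_NoDup_ForallPairs. intros x y _ _ E; lia. apply seq_NoDup. Qed.

Lemma zr_length lo n : length (zr lo n) = n.
Proof. unfold zr. rewrite length_map, length_seq. auto. Qed.

Lemma map_seq_shift {B} (f : nat -> B) m : forall s,
  map f (seq s m) = map (fun i => f (s + i)%nat) (seq 0 m).
Proof. induction m; intros s; simpl; auto. f_equal. f_equal; lia.
  rewrite IHm. rewrite <- seq_shift. rewrite map_map. apply map_ext. intros; f_equal; lia. Qed.

Lemma zr_app lo n m : zr lo (n + m) = zr lo n ++ zr (lo + Z.of_nat n) m.
Proof. unfold zr. rewrite seq_app, map_app. f_equal. simpl.
  rewrite map_seq_shift. apply map_ext. intros; lia. Qed.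
Definition cross (a b w : Z*Z) : Z :=
  ((fst b - fst a) * (snd w - snd a) - (snd b - snd a) * (fst w - fst a))%Z.
Definition colb (a b w : Z*Z) : bool := Z.eqb (cross a b w) 0.
Fixpoint badb (P : list (Z*Z)) (w : Z*Z) : bool :=
  match P with [] => false | z :: P' => orb (badb P' w) (existsb (fun a => colb z a w) P') end.
Fixpoint GPl (P : list (Z*Z)) : Prop :=
  match P with [] => True | z :: P' => GPl P' /\ ~ In z P' /\ badb P' z = false end.

Lemma cross_swap12 a b w : cross b a w = (- cross a b w)%Z.
Proof. unfold cross; ring. Qed.
Lemma cross_swap23 a b w : cross a w b = (- cross a b w)%Z.
Proof. unfold cross; ring. Qed.
Lemma cross_cyc a b w : cross b w a = cross a b w.
Proof. unfold cross; ring. Qed.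

Lemma badb_spec P w : badb P w = false -> forall q r, In q P -> In r P -> q <> r -> cross q r w <> 0%Z.
Proof. induction P as [|z P IH]; simpl; intros H q r Hq Hr Hqr; [contradiction|].
  apply Bool.orb_false_elim in H. destruct H as [H1 H2].
  assert (Hz : forall a, In a P -> cross z a w <> 0%Z).
  { intros a Ha. intro E. assert (existsb (fun a => colb z a w) P = true).
    { apply existsb_exists. exists a. split; auto. unfold colb. rewrite E. reflexivity. } congruence. }
  destruct Hq as [Hq|Hq]; destruct Hr as [Hr|Hr]; subst.
  - congruence.
  - apply Hz; auto.
  - rewrite cross_swap12. intro E. apply (Hz q Hq). lia.
  - apply IH; auto.
Qed.

Lemma GPl_NoDup P : GPl P -> NoDup P.
Proof. induction P; simpl; intros H; constructor; tauto. Qed.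

Lemma GPl_spec P : GPl P -> forall p q r, In p P -> In q P -> In r P -> p <> q -> q <> r -> p <> r ->
  cross p q r <> 0%Z.
Proof. induction P as [|z P IH]; simpl; intros HG p q r Hp Hq Hr Hpq Hqr Hpr; [contradiction|].
  destruct HG as [H1 [H2 H3]].
  pose proof (badb_spec P z H3) as B.
  destruct Hp as [Hp|Hp]; destruct Hq as [Hq|Hq]; destruct Hr as [Hr|Hr]; subst; try congruence.
  - rewrite <- cross_cyc. apply B; auto.
  - rewrite cross_swap23. intro E. apply (B p r Hp Hr Hpr). lia.
  - apply B; auto.
  - apply IH; auto.
Qed.

Definition sub (z a : Z*Z) : Z*Z := (fst z - fst a, snd z - snd a)%Z.
Definition W (u : Z*Z) : R := IZR (Z.gcd (fst u) (snd u)) / IZR (Z.max (Z.abs (fst u)) (Z.abs (snd u))).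

Lemma W_sym z a : W (sub z a) = W (sub a z).
Proof. unfold W, sub; simpl.
  replace (fst a - fst z)%Z with (- (fst z - fst a))%Z by ring.
  replace (snd a - snd z)%Z with (- (snd z - snd a))%Z by ring.
  rewrite Z.gcd_opp_l, Z.gcd_opp_r, !Z.abs_opp. reflexivity. Qed.

Lemma W_nonneg u : 0 <= W u.
Proof. unfold W. destruct (Z.eq_dec (Z.max (Z.abs (fst u)) (Z.abs (snd u))) 0) as [E|E].
  - rewrite E. unfold Rdiv. rewrite Rinv_0. lra.
  - apply Rle_mult_inv_pos. apply IZR_le. apply Z.gcd_nonneg. apply IZR_lt. lia. Qed.

Lemma gcd_le_abs a b : (a <> 0)%Z -> (Z.gcd a b <= Z.abs a)%Z.
Proof. intros H. destruct (Z.gcd_divide_l a b) as [k Hk].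
  pose proof (Z.gcd_nonneg a b). 
  assert (Z.gcd a b <> 0)%Z. { intro E. rewrite E in Hk. lia. }
  set (g := Z.gcd a b) in *. clearbody g.
  assert (Z.abs a = Z.abs k * g)%Z by (rewrite Hk, Z.abs_mul, (Z.abs_eq g) by lia; ring).
  assert (k <> 0)%Z by (intro; subst; lia). nia. Qed.

Lemma W_le1 u : W u <= 1.
Proof. unfold W. destruct (Z.eq_dec (Z.max (Z.abs (fst u)) (Z.abs (snd u))) 0) as [E|E].
  - rewrite E. unfold Rdiv. rewrite Rinv_0. lra.
  - assert (G : (Z.gcd (fst u) (snd u) <= Z.max (Z.abs (fst u)) (Z.abs (snd u)))%Z).
    { destruct (Z.eq_dec (fst u) 0) as [E1|E1].
      - rewrite E1. rewrite Z.gcd_0_l. lia.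
      - pose proof (gcd_le_abs _ (snd u) E1). lia. }
    apply IZR_le in G. assert (0 < IZR (Z.max (Z.abs (fst u)) (Z.abs (snd u)))) by (apply IZR_lt; lia).
    apply (Rmult_le_reg_r (IZR (Z.max (Z.abs (fst u)) (Z.abs (snd u))))); auto.
    unfold Rdiv. rewrite Rmult_assoc, Rinv_l by lra. lra. Qed.

Definition inBox (X : Z) (p : Z*Z) : Prop := (1 <= fst p <= 2*X-1 /\ 1 <= snd p <= X)%Z.
Definition inR (X : Z) (p : Z*Z) : Prop := (X <= fst p <= 2*X-1 /\ 1 <= snd p <= X)%Z.
Definition Rg (X : Z) : list (Z*Z) := list_prod (zr X (Z.to_nat X)) (zr 1 (Z.to_nat X)).

Lemma Rg_In X p : (1 <= X)%Z -> In p (Rg X) <-> inR X p.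
Proof. intros HX. destruct p as [x y]. unfold Rg, inR. rewrite in_prod_iff, !zr_In. rewrite Z2Nat.id by lia. cbn [fst snd]. split; intros; lia. Qed.

Lemma Rg_NoDup X : NoDup (Rg X).
Proof. apply NoDup_prod; apply zr_NoDup. Qed.

Lemma Rg_length X : (1 <= X)%Z -> INR (length (Rg X)) = IZR X * IZR X.
Proof. intros. unfold Rg. rewrite length_prod, !zr_length. rewrite mult_INR, !INR_IZR_INZ.
  rewrite Z2Nat.id by lia. ring. Qed.

Lemma line_count X a b : (1 <= X)%Z -> inBox X a -> inBox X b -> a <> b ->
  INR (length (filter (colb a b) (Rg X))) <= 6 * IZR X * W (sub b a).
Proof.
  intros HX Ha Hb Hab. destruct a as [a1 a2], b as [b1 b2]. unfold inBox in *; cbn [fst snd] in *.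
  set (u1 := (b1 - a1)%Z). set (u2 := (b2 - a2)%Z).
  set (g := Z.gcd u1 u2).
  assert (Hu : (u1 <> 0 \/ u2 <> 0)%Z).
  { destruct (Z.eq_dec u1 0); destruct (Z.eq_dec u2 0); try tauto. exfalso; apply Hab. f_equal; unfold u1, u2 in *; lia. }
  assert (Hg0 : (0 < g)%Z).
  { pose proof (Z.gcd_nonneg u1 u2). assert (g <> 0)%Z; [|lia].
    intro E. apply Z.gcd_eq_0 in E. lia. }
  destruct (Z.gcd_divide_l u1 u2) as [p Hp]. destruct (Z.gcd_divide_r u1 u2) as [q Hq].
  fold g in Hp, Hq.
  set (h := Z.max (Z.abs p) (Z.abs q)).
  assert (Hh : (1 <= h)%Z). { unfold h. destruct Hu; [assert (p<>0)%Z by (intro; subst; lia)|assert (q<>0)%Z by (intro; subst; lia)]; lia. }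
  assert (HM : Z.max (Z.abs u1) (Z.abs u2) = (g * h)%Z).
  { unfold h. rewrite Hp, Hq, !Z.abs_mul, (Z.abs_eq g) by lia. rewrite Z.mul_max_distr_nonneg_r by lia. ring. }
  assert (HhX : (h <= 2*X)%Z).
  { assert (Z.abs u1 <= 2*X /\ Z.abs u2 <= 2*X)%Z by (unfold u1, u2; lia).
    assert (g * h <= 2 * X)%Z by lia. nia. }
  set (K := ((2*X-1) / h)%Z).
  assert (HK0 : (0 <= K)%Z) by (apply Z.div_pos; lia).
  assert (HKh : (h * K <= 2*X-1)%Z) by (apply Z.mul_div_le; lia).
  assert (Hlen : (length (filter (colb (a1,a2) (b1,b2)) (Rg X)) <= length (map (fun t => (a1 + t*p, a2 + t*q)%Z) (zr (-K) (Z.to_nat (2*K+1)))))%nat).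
  { apply NoDup_incl_length. apply NoDup_filter, Rg_NoDup.
    intros [w1 w2] Hw. apply filter_In in Hw. destruct Hw as [Hw Hc].
    apply Rg_In in Hw; auto. unfold inR in Hw; cbn [fst snd] in Hw.
    unfold colb, cross in Hc; cbn [fst snd] in Hc. apply Z.eqb_eq in Hc. fold u1 u2 in Hc.
    destruct (Z.gcd_bezout u1 u2 g eq_refl) as [x [y Hxy]].
    set (s1 := (w1 - a1)%Z) in *. set (s2 := (w2 - a2)%Z) in *.
    set (t := (x * s1 + y * s2)%Z).
    assert (E1 : (g * s1 = u1 * t)%Z).
    { unfold t. rewrite <- Hxy. assert (Hc' : (u2 * s1 = u1 * s2)%Z) by lia.
      replace ((x*u1+y*u2)*s1)%Z with (x*u1*s1 + y*(u2*s1))%Z by ring. rewrite Hc'. ring. }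
    assert (E2 : (g * s2 = u2 * t)%Z).
    { unfold t. rewrite <- Hxy. assert (Hc' : (u2 * s1 = u1 * s2)%Z) by lia.
      replace ((x*u1+y*u2)*s2)%Z with (x*(u1*s2) + y*u2*s2)%Z by ring. rewrite <- Hc'. ring. }
    rewrite Hp in E1. rewrite Hq in E2.
    assert (F1 : s1 = (t * p)%Z). { apply (Z.mul_reg_l _ _ g); lia. }
    assert (F2 : s2 = (t * q)%Z). { apply (Z.mul_reg_l _ _ g); lia. }
    apply in_map_iff. exists t. split.
    - f_equal; unfold s1, s2 in *; lia.
    - apply zr_In.
      assert (Hs1 : (Z.abs s1 <= 2*X-1)%Z) by (unfold s1; lia).
      assert (Hs2 : (Z.abs s2 <= 2*X-1)%Z) by (unfold s2; lia).
      assert (Ht : (h * Z.abs t <= 2*X-1)%Z).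
      { unfold h. destruct (Z.max_spec (Z.abs p) (Z.abs q)) as [[_ E]|[_ E]]; rewrite E.
        - rewrite F2, Z.abs_mul in Hs2. lia.
        - rewrite F1, Z.abs_mul in Hs1. lia. }
      assert (Z.abs t <= K)%Z. { unfold K. apply Z.div_le_lower_bound; lia. }
      rewrite Z2Nat.id by lia. lia. }
  rewrite length_map, zr_length in Hlen.
  apply le_INR in Hlen. eapply Rle_trans; [exact Hlen|].
  rewrite INR_IZR_INZ, Z2Nat.id by lia.
  unfold W, sub; cbn [fst snd]. fold u1 u2 g. rewrite HM.
  assert (Hz : ((2*K+1) * h <= 6 * X)%Z) by nia.
  apply IZR_le in Hz. rewrite !mult_IZR in *.
  assert (0 < IZR h) by (apply IZR_lt; lia). assert (0 < IZR g) by (apply IZR_lt; lia).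
  replace (6 * IZR X * (IZR g / (IZR g * IZR h))) with (6 * IZR X / IZR h) by (field; lra).
  apply (Rmult_le_reg_r (IZR h)); auto. unfold Rdiv. rewrite Rmult_assoc, Rinv_l by lra.
  rewrite Rmult_1_r. exact Hz.
Qed.

Definition D (P : list (Z*Z)) (z : Z*Z) : R := sumR (fun a => W (sub z a)) P.
Fixpoint T (P : list (Z*Z)) : R := match P with [] => 0 | z :: P' => T P' + D P' z end.

Lemma D_nonneg P z : 0 <= D P z.
Proof. apply sumR_nonneg. intros; apply W_nonneg. Qed.
Lemma T_nonneg P : 0 <= T P.
Proof. induction P; simpl; [lra|]. pose proof (D_nonneg P a). lra. Qed.

Lemma length_filter_existsb {A B} (f : B -> A -> bool) (L : list B) (l : list A) :
  INR (length (filter (fun w => existsb (fun a => f a w) L) l)) <= sumR (fun a => INR (length (filter (f a) l))) L.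
Proof. induction L as [|b L IH].
  - assert (E : forall l : list A, filter (fun w => existsb (fun a => f a w) []) l = []) by (induction l0; simpl; auto).
    rewrite E. simpl; lra.
  - eapply Rle_trans. apply le_INR. apply (length_filter_orb (f b) (fun w => existsb (fun a => f a w) L)).
    rewrite plus_INR. simpl. lra. Qed.

Lemma forb_count X P : (1 <= X)%Z -> GPl P -> (forall p, In p P -> inBox X p) ->
  INR (length (filter (badb P) (Rg X))) <= 6 * IZR X * T P.
Proof. intros HX. induction P as [|z P IH]; intros HG HB.
  - assert (E : forall l : list (Z*Z), filter (badb []) l = []) by (induction l; simpl; auto).
    rewrite E. simpl; lra.
  - destruct HG as [HG [Hn Hb]].
    change (filter (badb (z :: P)) (Rg X)) with
      (filter (fun w => orb (badb P w) (existsb (fun a => colb z a w) P)) (Rg X)).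
    eapply Rle_trans. apply le_INR. apply length_filter_orb. rewrite plus_INR.
    assert (H1 : INR (length (filter (badb P) (Rg X))) <= 6 * IZR X * T P) by (apply IH; auto; intros; apply HB; simpl; auto).
    assert (H2 : INR (length (filter (fun w => existsb (fun a => colb z a w) P) (Rg X))) <= 6 * IZR X * D P z).
    { eapply Rle_trans. apply (length_filter_existsb (fun a w => colb z a w)).
      unfold D. rewrite <- sumR_scal. apply sumR_le. intros a Ha.
      rewrite W_sym. apply line_count; auto. apply HB; simpl; auto. apply HB; simpl; auto.
      intro E; subst; contradiction. }
    simpl T. lra. Qed.

Definition dvb (d x : Z) : bool := Z.eqb (x mod d) 0.
Definition Hs (n : nat) : R := sumR (fun d => / IZR d) (zr 1 n).

Lemma Hs_nonneg n : 0 <= Hs n.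
Proof. apply sumR_nonneg. intros x Hx. apply zr_In in Hx. left. apply Rinv_0_lt_compat, IZR_lt. lia. Qed.

Lemma dvb_true d x : (0 < d)%Z -> dvb d x = true -> x = (d * (x / d))%Z.
Proof. intros Hd H. unfold dvb in H. apply Z.eqb_eq in H. pose proof (Z.div_mod x d). lia. Qed.

Lemma dvb_intro d x k : (0 < d)%Z -> x = (k * d)%Z -> dvb d x = true.
Proof. intros Hd H. unfold dvb. apply Z.eqb_eq. subst. apply Z.mod_mul. lia. Qed.

Lemma W_pointwise X u1 u2 : (1 <= X)%Z -> (u1 <> 0)%Z -> (Z.abs u1 <= 2*X)%Z ->
  W (u1, u2) <= sumR (fun d => (if dvb d u1 then IZR d / IZR (Z.abs u1) else 0) * (if dvb d u2 then 1 else 0))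
                  (zr 1 (Z.to_nat (2*X))).
Proof. intros HX Hu HuX.
  set (g := Z.gcd u1 u2).
  assert (Hg : (1 <= g <= Z.abs u1)%Z).
  { split. pose proof (Z.gcd_nonneg u1 u2). assert (g <> 0)%Z; [|unfold g in *; lia].
    intro E. apply Z.gcd_eq_0 in E. lia. apply gcd_le_abs; auto. }
  eapply Rle_trans; [|apply (sumR_one _ _ g)].
  - destruct (Z.gcd_divide_l u1 u2) as [k1 H1]. destruct (Z.gcd_divide_r u1 u2) as [k2 H2].
    fold g in H1, H2.
    rewrite (dvb_intro g u1 k1), (dvb_intro g u2 k2) by lia. rewrite Rmult_1_r.
    unfold W; cbn [fst snd]. fold g.
    assert (0 < IZR (Z.abs u1)) by (apply IZR_lt; lia).
    assert (IZR (Z.abs u1) <= IZR (Z.max (Z.abs u1) (Z.abs u2))) by (apply IZR_le; lia).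
    assert (0 <= IZR g) by (apply IZR_le; lia).
    unfold Rdiv. apply Rmult_le_compat_l; auto. apply Rinv_le_contravar; lra.
  - apply zr_In. rewrite Z2Nat.id by lia. lia.
  - intros d Hd. apply zr_In in Hd.
    destruct (dvb d u1), (dvb d u2); try lra.
    rewrite Rmult_1_r. apply Rle_mult_inv_pos. apply IZR_le; lia. apply IZR_lt; lia.
Qed.

Lemma count_mult X d a2 : (1 <= X)%Z -> (1 <= d)%Z ->
  sumR (fun z2 => if dvb d (z2 - a2) then 1 else 0) (zr 1 (Z.to_nat X)) <= IZR X / IZR d + 1.
Proof. intros HX Hd.
  set (L := Z.to_nat (X / d - 1 / d + 1)).
  assert (HXd : (1 / d <= X / d)%Z) by (apply Z.div_le_mono; lia).
  eapply Rle_trans.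
  apply (sumR_inj _ (fun z2 => dvb d (z2 - a2)) (fun z2 => z2 / d)%Z (fun _ => 1) _ (zr (1/d) L)).
  - apply zr_NoDup.
  - intros x _ E. rewrite E. lra.
  - intros x Hx E. rewrite E. split; [|lra]. apply zr_In in Hx. apply zr_In. unfold L.
    rewrite Z2Nat.id by lia. assert (1/d <= x/d <= X/d)%Z by (split; apply Z.div_le_mono; lia). lia.
  - intros x y Hx Hy Ex Ey E.
    apply dvb_true in Ex; [|lia]. apply dvb_true in Ey; [|lia].
    set (kx := ((x - a2) / d)%Z) in *. set (ky := ((y - a2) / d)%Z) in *.
    assert (Ex' : x = (a2 + kx * d)%Z) by lia. assert (Ey' : y = (a2 + ky * d)%Z) by lia.
    rewrite Ex', Ey' in E. rewrite !Z.div_add in E by lia. lia.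
  - intros; lra.
  - eapply Rle_trans. apply (sumR_const_le _ _ 1). intros; lra.
    rewrite zr_length. unfold L. rewrite INR_IZR_INZ, Z2Nat.id by lia.
    rewrite Rmult_1_r. rewrite plus_IZR, minus_IZR.
    assert (0 <= IZR (1/d)) by (apply IZR_le; apply Z.div_pos; lia).
    assert (IZR (X/d) <= IZR X / IZR d).
    { assert (0 < IZR d) by (apply IZR_lt; lia).
      assert (IZR d * IZR (X/d) <= IZR X) by (rewrite <- mult_IZR; apply IZR_le; apply Z.mul_div_le; lia).
      apply (Rmult_le_reg_l (IZR d)); auto. unfold Rdiv. rewrite <- Rmult_assoc, (Rmult_comm (IZR d) (IZR X)), Rmult_assoc, Rinv_r by lra. lra. }
    lra.
Qed.

Lemma harm_half X d a1 (sgn : bool) : (1 <= X)%Z -> (1 <= d)%Z -> (1 <= a1 <= 2*X-1)%Z ->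
  sumR (fun z1 => if (if sgn then Z.ltb a1 z1 else Z.ltb z1 a1) && dvb d (if sgn then z1 - a1 else a1 - z1)
                  then IZR d / IZR (Z.abs (z1 - a1)) else 0) (zr X (Z.to_nat X))
  <= Hs (Z.to_nat (2*X)).
Proof. intros HX Hd Ha.
  unfold Hs.
  apply (sumR_inj _ (fun z1 => (if sgn then Z.ltb a1 z1 else Z.ltb z1 a1) && dvb d (if sgn then z1 - a1 else a1 - z1))
            (fun z1 => ((if sgn then z1 - a1 else a1 - z1) / d)%Z)).
  - apply zr_NoDup.
  - intros x _ E. rewrite E. lra.
  - intros x Hx E. apply zr_In in Hx. rewrite Z2Nat.id in Hx by lia.
    rewrite E. apply andb_prop in E. destruct E as [E1 E2].
    apply dvb_true in E2; [|lia].
    set (v := (if sgn then x - a1 else a1 - x)%Z) in *.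
    assert (Hv : (1 <= v <= 2*X)%Z /\ Z.abs (x - a1) = v).
    { unfold v. destruct sgn; [apply Z.ltb_lt in E1|apply Z.ltb_lt in E1]; lia. }
    destruct Hv as [Hv Habs].
    assert (Hj : (1 <= v / d <= 2*X)%Z).
    { split. nia. apply Z.div_le_upper_bound; nia. }
    split. apply zr_In. rewrite Z2Nat.id by lia. lia.
    rewrite Habs. rewrite E2 at 1. rewrite mult_IZR.
    assert (0 < IZR d) by (apply IZR_lt; lia). assert (0 < IZR (v/d)) by (apply IZR_lt; lia).
    right. field. lra.
  - intros x y Hx Hy Ex Ey E.
    apply andb_prop in Ex. apply andb_prop in Ey. destruct Ex as [_ Ex], Ey as [_ Ey].
    apply dvb_true in Ex; [|lia]. apply dvb_true in Ey; [|lia].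
    destruct sgn; rewrite E in Ex; lia.
  - intros y Hy. apply zr_In in Hy. left. apply Rinv_0_lt_compat, IZR_lt. lia.
Qed.

Lemma harm_full X d a1 : (1 <= X)%Z -> (1 <= d)%Z -> (1 <= a1 <= 2*X-1)%Z ->
  sumR (fun z1 => if Z.eqb z1 a1 then 0 else (if dvb d (z1 - a1) then IZR d / IZR (Z.abs (z1 - a1)) else 0))
       (zr X (Z.to_nat X)) <= 2 * Hs (Z.to_nat (2*X)).
Proof. intros HX Hd Ha.
  pose proof (harm_half X d a1 true HX Hd Ha) as H1.
  pose proof (harm_half X d a1 false HX Hd Ha) as H2.
  cbn iota in H1, H2. replace (2 * Hs (Z.to_nat (2*X))) with (Hs (Z.to_nat (2*X)) + Hs (Z.to_nat (2*X))) by ring.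
  eapply Rle_trans; [|apply (Rplus_le_compat _ _ _ _ H1 H2)].
  rewrite <- sumR_plus. apply sumR_le. intros z1 _.
  destruct (Z.eqb_spec z1 a1).
  - subst. rewrite Z.ltb_irrefl. simpl. lra.
  - assert (0 <= IZR d / IZR (Z.abs (z1 - a1))) by (apply Rmult_le_pos; [apply IZR_le; lia| left; apply Rinv_0_lt_compat; apply IZR_lt; lia]).
    destruct (Z.ltb_spec a1 z1).
    + assert (L1 : Z.ltb z1 a1 = false) by (apply Z.ltb_ge; lia). rewrite L1. simpl.
      destruct (dvb d (z1 - a1)); lra.
    + assert (L1 : Z.ltb z1 a1 = true) by (apply Z.ltb_lt; lia). rewrite L1. simpl.
      replace (dvb d (a1 - z1)) with (dvb d (z1 - a1)).
      destruct (dvb d (z1 - a1)); lra.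
      unfold dvb. replace (a1 - z1)%Z with (- (z1 - a1))%Z by ring.
      destruct (Z.eqb_spec ((z1 - a1) mod d) 0); destruct (Z.eqb_spec ((- (z1 - a1)) mod d) 0); auto.
      * exfalso. apply n0. apply Z.mod_opp_l_z; lia.
      * exfalso. apply n0. rewrite <- (Z.opp_involutive (z1 - a1)). apply Z.mod_opp_l_z; lia.
Qed.

Lemma sumR_ext {A} (f g : A -> R) l : (forall x, In x l -> f x = g x) -> sumR f l = sumR g l.
Proof. intros H. apply Rle_antisym; apply sumR_le; intros x Hx; rewrite H; auto; lra. Qed.

Lemma sumR_zero {A} (l : list A) : sumR (fun _ => 0) l = 0.
Proof. induction l; simpl; lra. Qed.

Lemma sumR_ones {A} (l : list A) : sumR (fun _ => 1) l = INR (length l).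
Proof. induction l; cbn [sumR length]. simpl; lra. rewrite S_INR. lra. Qed.

Lemma avg X a : (1 <= X)%Z -> inBox X a ->
  sumR (fun z => W (sub z a)) (Rg X) <=
  IZR X + 2 * Hs (Z.to_nat (2*X)) * (IZR X * Hs (Z.to_nat (2*X)) + 2 * IZR X).
Proof. intros HX Ha. destruct a as [a1 a2]. unfold inBox in Ha; cbn [fst snd] in Ha.
  set (N := Z.to_nat (2*X)). set (DS := zr 1 N).
  set (C := fun d => sumR (fun z2 => if dvb d (z2 - a2) then 1 else 0) (zr 1 (Z.to_nat X))).
  set (E := fun d z1 => if Z.eqb z1 a1 then 0 else (if dvb d (z1 - a1) then IZR d / IZR (Z.abs (z1 - a1)) else 0)).
  unfold Rg. rewrite sumR_prod.
  assert (Step1 : forall z1, In z1 (zr X (Z.to_nat X)) ->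
     sumR (fun y => W (sub (z1, y) (a1, a2))) (zr 1 (Z.to_nat X)) <=
     (if Z.eqb z1 a1 then IZR X else 0) + sumR (fun d => C d * E d z1) DS).
  { intros z1 Hz1. apply zr_In in Hz1. rewrite Z2Nat.id in Hz1 by lia. unfold E.
    destruct (Z.eqb_spec z1 a1).
    - assert (Z0 : sumR (fun d => C d * (if true then 0 else (if dvb d (z1 - a1) then IZR d / IZR (Z.abs (z1 - a1)) else 0))) DS = 0).
      { rewrite (sumR_ext _ (fun d => 0)) by (intros; ring). apply sumR_zero. }
      rewrite Z0. eapply Rle_trans. apply (sumR_const_le _ _ 1). intros; apply W_le1.
      rewrite zr_length, INR_IZR_INZ, Z2Nat.id by lia. lra.
    - eapply Rle_trans. apply sumR_le. intros z2 Hz2.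
      apply (W_pointwise X (z1 - a1) (snd (z1,z2) - snd (a1,a2))); auto; lia.
      cbn [fst snd]. rewrite sumR_swap. rewrite Rplus_0_l. apply Req_le. apply sumR_ext. intros d Hd.
      unfold C; cbv beta. rewrite Rmult_comm, <- sumR_scal. apply sumR_ext. intros z2 _. ring. }
  eapply Rle_trans. apply sumR_le. exact Step1.
  rewrite sumR_plus. apply Rplus_le_compat.
  - eapply Rle_trans.
    apply (sumR_inj _ (fun z1 => Z.eqb z1 a1) (fun z1 => z1) (fun _ => IZR X) _ [a1]).
    + apply zr_NoDup.
    + intros x _ E0. rewrite E0. lra.
    + intros x _ E0. rewrite E0. apply Z.eqb_eq in E0. subst. simpl; split; auto; lra.
    + intros x y _ _ Ex Ey _. apply Z.eqb_eq in Ex. apply Z.eqb_eq in Ey. congruence.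
    + intros; apply IZR_le; lia.
    + simpl. lra.
  - rewrite sumR_swap.
    rewrite (sumR_ext _ (fun d => C d * sumR (fun z1 => E d z1) (zr X (Z.to_nat X)))) by (intros; rewrite sumR_scal; auto).
    eapply Rle_trans. apply sumR_le. intros d Hd.
    apply zr_In in Hd. unfold N in Hd. rewrite Z2Nat.id in Hd by lia.
    apply Rmult_le_compat.
    + apply sumR_nonneg. intros; destruct (dvb _ _); lra.
    + apply sumR_nonneg. intros z1 _. unfold E. destruct (Z.eqb_spec z1 a1); [lra|]. destruct (dvb _ _); [|lra].
      apply Rmult_le_pos. apply IZR_le; lia. left. apply Rinv_0_lt_compat. apply IZR_lt. lia.
    + apply count_mult; lia.
    + apply harm_full; lia.
    + fold N. rewrite (sumR_ext _ (fun d => 2 * Hs N * (IZR X * / IZR d) + 2 * Hs N * 1)) by (intros; unfold Rdiv; ring).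
      rewrite sumR_plus, !sumR_scal, sumR_ones. unfold DS. rewrite zr_length. 
      change (sumR (fun x : Z => / IZR x) (zr 1 N)) with (Hs N).
      replace (INR N) with (2 * IZR X). apply Req_le. ring.
      unfold N. rewrite INR_IZR_INZ, Z2Nat.id by lia. rewrite mult_IZR. reflexivity.
Qed.

Lemma Hs_pow j : Hs (2 ^ j) <= INR j + 1.
Proof. induction j.
  - unfold Hs. simpl. lra.
  - replace (2 ^ S j)%nat with (2^j + 2^j)%nat by (simpl; lia).
    unfold Hs in *. rewrite zr_app, sumR_app. rewrite S_INR.
    assert (Hp : (1 <= 2^j)%nat) by (pose proof (Nat.pow_nonzero 2 j); lia).
    set (p := (2^j)%nat) in *.
    assert (H2 : sumR (fun d => / IZR d) (zr (1 + Z.of_nat p) p) <= INR p * / (1 + INR p)).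
    { eapply Rle_trans. apply (sumR_const_le _ _ (/ (1 + INR p))).
      intros d Hd. apply zr_In in Hd.
      rewrite INR_IZR_INZ. rewrite <- plus_IZR. apply Rinv_le_contravar. apply IZR_lt; lia. apply IZR_le; lia.
      rewrite zr_length. lra. }
    assert (INR p * / (1 + INR p) <= 1).
    { assert (0 <= INR p) by apply pos_INR.
      apply (Rmult_le_reg_r (1 + INR p)). lra. rewrite Rmult_assoc, Rinv_l by lra. lra. }
    lra.
Qed.

Definition peq_dec (a b : Z*Z) : {a = b} + {a <> b}.
Proof. decide equality; apply Z.eq_dec. Defined.
Definition inb (z : Z*Z) (P : list (Z*Z)) : bool := if in_dec peq_dec z P then true else false.

Lemma filter_partition_length {A} (Q : A -> bool) l :
  length l = (length (filter Q l) + length (filter (fun x => negb (Q x)) l))%nat.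
Proof. induction l; simpl; auto. destruct (Q a); simpl; lia. Qed.

Lemma sumR_strict {A} (f : A -> R) l c : l <> [] -> (forall x, In x l -> c < f x) -> INR (length l) * c < sumR f l.
Proof. induction l as [|a l IH]; intros Hn H; [congruence|].
  cbn [length sumR]. rewrite S_INR.
  assert (c < f a) by (apply H; simpl; auto).
  destruct l as [|b l].
  - simpl. lra.
  - assert (INR (length (b :: l)) * c < sumR f (b :: l)) by (apply IH; [congruence| intros; apply H; simpl; auto]).
    lra. Qed.

Definition Gb (X : Z) : R := IZR X + 2 * Hs (Z.to_nat (2*X)) * (IZR X * Hs (Z.to_nat (2*X)) + 2 * IZR X).

Lemma Gb_nonneg X : (1 <= X)%Z -> 0 <= Gb X.
Proof. intros. unfold Gb. pose proof (Hs_nonneg (Z.to_nat (2*X))). assert (1 <= IZR X) by (apply IZR_le; lia).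
  assert (0 <= IZR X * Hs (Z.to_nat (2*X))) by (apply Rmult_le_pos; lra).
  assert (0 <= 2 * Hs (Z.to_nat (2 * X)) * (IZR X * Hs (Z.to_nat (2 * X)) + 2 * IZR X)) by (apply Rmult_le_pos; lra).
  lra. Qed.

Lemma exists_good X P : (1 <= X)%Z -> GPl P -> (forall p, In p P -> inBox X p) ->
  INR (length P) + 6 * IZR X * T P <= IZR X * IZR X / 2 ->
  exists z, inR X z /\ ~ In z P /\ badb P z = false /\
    D P z <= 2 * INR (length P) * Gb X / (IZR X * IZR X).
Proof. intros HX HG HB Hc.
  assert (HX0 : 0 < IZR X) by (apply IZR_lt; lia).
  set (Q := fun z => orb (badb P z) (inb z P)).
  set (fr := filter (fun z => negb (Q z)) (Rg X)).
  assert (Hfr : IZR X * IZR X / 2 <= INR (length fr)).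
  { pose proof (filter_partition_length Q (Rg X)) as E. apply (f_equal INR) in E.
    rewrite plus_INR, Rg_length in E by auto.
    assert (H1 : (length (filter Q (Rg X)) <= length (filter (badb P) (Rg X)) + length (filter (fun z => inb z P) (Rg X)))%nat)
      by apply length_filter_orb.
    assert (H2 : (length (filter (fun z => inb z P) (Rg X)) <= length P)%nat).
    { apply (length_filter_inj _ (fun z => z)). apply Rg_NoDup.
      intros x _ E0. unfold inb in E0. destruct (in_dec peq_dec x P); auto; discriminate. auto. }
    pose proof (forb_count X P HX HG HB).
    apply le_INR in H1. apply le_INR in H2. rewrite plus_INR in H1. unfold fr. lra. }
  set (t := 2 * INR (length P) * Gb X / (IZR X * IZR X)).
  destruct (classic (exists z, In z fr /\ D P z <= t)) as [[z [Hz Hd]]|Hn].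
  - exists z. unfold fr in Hz. apply filter_In in Hz. destruct Hz as [Hz Hq].
    apply Bool.negb_true_iff in Hq. unfold Q in Hq. apply Bool.orb_false_elim in Hq. destruct Hq as [Hq1 Hq2].
    split; [|split; [|split]]; auto.
    + apply Rg_In in Hz; auto.
    + intro Hin. unfold inb in Hq2. destruct (in_dec peq_dec z P); [discriminate|contradiction].
  - exfalso.
    assert (Hall : forall z, In z fr -> t < D P z).
    { intros z Hz. apply Rnot_le_lt. intro. apply Hn. eauto. }
    assert (Hne : fr <> []).
    { intro E. rewrite E in Hfr. simpl in Hfr. nra. }
    pose proof (sumR_strict (D P) fr t Hne Hall) as S1.
    assert (S2 : sumR (D P) fr <= sumR (D P) (Rg X)) by (apply sumR_filter_ge; intros; apply D_nonneg).
    assert (S3 : sumR (D P) (Rg X) <= INR (length P) * Gb X).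
    { unfold D. rewrite sumR_swap. eapply Rle_trans. apply (sumR_const_le _ _ (Gb X)).
      intros a Ha. apply avg; auto. lra. }
    assert (0 <= t). { unfold t. apply Rmult_le_pos. apply Rmult_le_pos. pose proof (pos_INR (length P)); lra. apply Gb_nonneg; auto.
      left; apply Rinv_0_lt_compat; nra. }
    assert (IZR X * IZR X / 2 * t <= INR (length fr) * t) by (apply Rmult_le_compat_r; auto).
    assert (IZR X * IZR X / 2 * t = INR (length P) * Gb X) by (unfold t; field; lra).
    lra.
Qed.

Lemma inR_inBox X z : (1 <= X)%Z -> inR X z -> inBox X z.
Proof. unfold inR, inBox. lia. Qed.

Lemma block X : (1 <= X)%Z -> forall m P, GPl P -> (forall p, In p P -> inBox X p) ->
  forall (Mbk : nat) (Tmax iota : R),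
  (length P + m <= Mbk)%nat -> 2 * INR Mbk * Gb X / (IZR X * IZR X) <= iota ->
  T P + INR m * iota <= Tmax -> INR Mbk + 6 * IZR X * Tmax <= IZR X * IZR X / 2 ->
  exists B, length B = m /\ GPl (B ++ P) /\ (forall z, In z B -> inR X z) /\ T (B ++ P) <= T P + INR m * iota.
Proof. intros HX m. induction m as [|m IH]; intros P HG HB Mbk Tmax iota Hl Hi HT Hc.
  - exists []. simpl. split; [|split; [|split]]; auto. intros; contradiction. lra.
  - assert (HX0 : 0 < IZR X) by (apply IZR_lt; lia).
    assert (Hio : 0 <= iota).
    { eapply Rle_trans; [|exact Hi]. apply Rmult_le_pos. apply Rmult_le_pos. pose proof (pos_INR Mbk); lra. apply Gb_nonneg; auto.
      left; apply Rinv_0_lt_compat; nra. }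
    assert (HTP : 0 <= T P) by apply T_nonneg.
    destruct (exists_good X P HX HG HB) as [z [Hz [Hzn [Hzb Hzd]]]].
    { rewrite S_INR in HT. apply le_INR in Hl. rewrite plus_INR, S_INR in Hl.
      pose proof (pos_INR m). 
      assert (T P <= Tmax) by nra.
      assert (6 * IZR X * T P <= 6 * IZR X * Tmax) by (apply Rmult_le_compat_l; lra). lra. }
    assert (Hd : D P z <= iota).
    { eapply Rle_trans; [exact Hzd|]. eapply Rle_trans; [|exact Hi].
      apply Rmult_le_compat_r. left; apply Rinv_0_lt_compat; nra.
      apply Rmult_le_compat_r. apply Gb_nonneg; auto. apply Rmult_le_compat_l; [lra|]. apply le_INR; lia. }
    destruct (IH (z :: P)) with (Mbk := Mbk) (Tmax := Tmax) (iota := iota) as [B [HBl [HBG [HBR HBT]]]].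
    + simpl. auto.
    + intros p [Hp|Hp]. subst. apply inR_inBox; auto. auto.
    + simpl; lia.
    + auto.
    + simpl. rewrite S_INR in HT. lra.
    + auto.
    + exists (B ++ [z]). rewrite <- app_assoc. cbn [app]. split; [|split; [|split]].
      * rewrite length_app. simpl. lia.
      * auto.
      * intros y Hy. apply in_app_or in Hy. destruct Hy as [Hy|[Hy|[]]]; auto. subst; auto.
      * rewrite S_INR. simpl T in HBT. lra.
Qed.

Definition lam (a : R) (j : nat) : R := Rpower (INR j) a.
Definition cc : R := 1/200.
Definition mm (a : R) (j0 j : nat) : nat :=
  if Nat.leb j0 j then Z.to_nat (Int_part (cc * 2 ^ j / lam a j)) else 0%nat.
Fixpoint Mb (a : R) (j0 j : nat) : nat :=
  match j with 0 => mm a j0 0 | S j' => (Mb a j0 j' + mm a j0 (S j'))%nat end.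

Lemma lam_pos a j : (1 <= j)%nat -> 0 < lam a j.
Proof. intros. unfold lam, Rpower. apply exp_pos. Qed.

Lemma lam_ge a j : 1 <= a -> (1 <= j)%nat -> INR j <= lam a j.
Proof. intros Ha Hj. unfold lam. rewrite <- (Rpower_1 (INR j)) at 1.
  apply Rle_Rpower; auto. apply (le_INR 1) in Hj. simpl in Hj. lra. apply (lt_INR 0) in Hj. simpl in Hj; lra. Qed.

Lemma ln_le_sub1 x : 0 < x -> ln x <= x - 1.
Proof. intros Hx. pose proof (exp_ineq1_le (ln x)). rewrite exp_ln in H by auto. lra. Qed.

Lemma exp_le x y : x <= y -> exp x <= exp y.
Proof. intros [H|H]. left; apply exp_increasing; auto. subst; lra. Qed.

Lemma exp_third : exp (1/3) <= 3/2.
Proof. pose proof (exp_ineq1_le (-(1/3))). pose proof (exp_pos (-(1/3))).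
  assert (E : exp (1/3) * exp (-(1/3)) = 1).
  { rewrite <- exp_plus. replace (1/3 + - (1/3)) with 0 by ring. apply exp_0. }
  pose proof (exp_pos (1/3)). nra. Qed.

Lemma lam_ratio a j : 1 <= a -> (1 <= j)%nat -> 3 * a <= INR j -> lam a (S j) <= 3/2 * lam a j.
Proof. intros Ha Hj Hr. unfold lam, Rpower.
  assert (Hj0 : 0 < INR j) by (apply (lt_INR 0); lia).
  rewrite S_INR.
  assert (L : ln (INR j + 1) - ln (INR j) <= 1 / INR j).
  { replace (INR j + 1) with (INR j * ((INR j + 1) / INR j)) at 1 by (field; lra).
    rewrite ln_mult by (try apply Rdiv_lt_0_compat; lra).
    assert (ln ((INR j + 1) / INR j) <= (INR j + 1) / INR j - 1) by (apply ln_le_sub1; apply Rdiv_lt_0_compat; lra).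
    replace ((INR j + 1) / INR j - 1) with (1 / INR j) in H by (field; lra). lra. }
  assert (L2 : a * ln (INR j + 1) <= a * ln (INR j) + 1/3).
  { assert (a * (ln (INR j + 1) - ln (INR j)) <= a * (1 / INR j)) by (apply Rmult_le_compat_l; lra).
    assert (a * (1 / INR j) <= 1/3).
    { apply (Rmult_le_reg_r (INR j)); auto. unfold Rdiv. rewrite Rmult_assoc, Rmult_1_l, Rinv_l by lra. lra. }
    lra. }
  eapply Rle_trans. apply exp_le. exact L2. rewrite exp_plus.
  rewrite Rmult_comm. apply Rmult_le_compat_r. left; apply exp_pos. apply exp_third.
Qed.

Lemma Int_part_nonneg x : 0 <= x -> (0 <= Int_part x)%Z.
Proof. intros H. destruct (base_Int_part x) as [H1 H2].
  assert (-1 < IZR (Int_part x)) by lra. apply lt_IZR in H0. lia. Qed.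

Lemma mm_le a j0 j : (1 <= j)%nat -> INR (mm a j0 j) <= cc * 2 ^ j / lam a j.
Proof. intros Hj. unfold mm. pose proof (lam_pos a j Hj).
  assert (0 <= cc * 2 ^ j / lam a j).
  { unfold cc. apply Rmult_le_pos. apply Rmult_le_pos. lra. apply pow_le; lra. left; apply Rinv_0_lt_compat; auto. }
  destruct (Nat.leb j0 j). 
  - rewrite INR_IZR_INZ, Z2Nat.id by (apply Int_part_nonneg; auto). apply base_Int_part.
  - simpl; auto.
Qed.

Lemma mm_ge a j0 j : (1 <= j)%nat -> (j0 <= j)%nat -> cc * 2 ^ j / lam a j - 1 <= INR (mm a j0 j).
Proof. intros Hj Hjj. unfold mm. pose proof (lam_pos a j Hj).
  assert (0 <= cc * 2 ^ j / lam a j).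
  { unfold cc. apply Rmult_le_pos. apply Rmult_le_pos. lra. apply pow_le; lra. left; apply Rinv_0_lt_compat; auto. }
  replace (Nat.leb j0 j) with true by (symmetry; apply Nat.leb_le; auto).
  rewrite INR_IZR_INZ, Z2Nat.id by (apply Int_part_nonneg; auto). destruct (base_Int_part (cc * 2 ^ j / lam a j)). lra.
Qed.

Lemma Mb_zero a j0 j : (j < j0)%nat -> Mb a j0 j = 0%nat.
Proof. induction j; intros H; simpl; unfold mm.
  - replace (Nat.leb j0 0) with false by (symmetry; apply Nat.leb_gt; lia). auto.
  - rewrite IHj by lia. replace (Nat.leb j0 (S j)) with false by (symmetry; apply Nat.leb_gt; lia). auto.
Qed.

Lemma Mb_le a j0 j : 1 <= a -> (1 <= j0)%nat -> 3 * a <= INR j0 -> (j0 <= j)%nat ->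
  INR (Mb a j0 j) <= 4 * cc * 2 ^ j / lam a j.
Proof. intros Ha Hj0 Hr. induction j; intros Hj; [lia|].
  pose proof (lam_pos a (S j) ltac:(lia)).
  assert (Hc : 0 < cc) by (unfold cc; lra).
  simpl Mb. rewrite plus_INR.
  pose proof (mm_le a j0 (S j) ltac:(lia)).
  destruct (Nat.eq_dec j0 (S j)) as [E|E].
  - rewrite Mb_zero by lia. simpl INR at 1.
    assert (0 <= cc * 2 ^ S j / lam a (S j)).
    { apply Rmult_le_pos. apply Rmult_le_pos. lra. apply pow_le; lra. left; apply Rinv_0_lt_compat; auto. }
    assert (cc * 2 ^ S j / lam a (S j) <= 4 * cc * 2 ^ S j / lam a (S j)).
    { unfold Rdiv. apply Rmult_le_compat_r. left; apply Rinv_0_lt_compat; auto. 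
      assert (0 <= cc * 2 ^ S j) by (apply Rmult_le_pos; [lra| apply pow_le; lra]). lra. }
    lra.
  - assert (Hjj : (j0 <= j)%nat) by lia. specialize (IHj Hjj).
    pose proof (lam_pos a j ltac:(lia)).
    assert (Rat : lam a (S j) <= 3/2 * lam a j).
    { apply lam_ratio; auto. lia. apply Rle_trans with (INR j0); auto. apply le_INR; auto. }
    assert (4 * cc * 2 ^ j / lam a j <= 3 * cc * 2 ^ S j / lam a (S j)).
    { simpl (2 ^ S j). 
      apply (Rmult_le_reg_r (lam a j * lam a (S j))). nra.
      replace (4 * cc * 2 ^ j / lam a j * (lam a j * lam a (S j))) with (4 * cc * 2^j * lam a (S j)) by (field; lra).
      replace (3 * cc * (2 * 2 ^ j) / lam a (S j) * (lam a j * lam a (S j))) with (6 * cc * 2^j * lam a j) by (field; lra).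
      assert (0 < cc * 2^j) by (apply Rmult_lt_0_compat; auto; apply pow_lt; lra). nra. }
    assert (3 * cc * 2 ^ S j / lam a (S j) + cc * 2 ^ S j / lam a (S j) = 4 * cc * 2 ^ S j / lam a (S j)) by (field; lra).
    lra.
Qed.

Definition Xk (k : nat) : Z := (2 ^ Z.of_nat k)%Z.

Lemma Xk_IZR k : IZR (Xk k) = 2 ^ k.
Proof. unfold Xk. rewrite <- pow_IZR. reflexivity. Qed.

Lemma Xk_ge1 k : (1 <= Xk k)%Z.
Proof. unfold Xk. pose proof (Z.pow_pos_nonneg 2 (Z.of_nat k)). lia. Qed.

Lemma Xk_S k : Xk (S k) = (2 * Xk k)%Z.
Proof. unfold Xk. rewrite Nat2Z.inj_succ, Z.pow_succ_r by lia. ring. Qed.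

Lemma Xk_nat k : Z.to_nat (2 * Xk k) = (2 ^ S k)%nat.
Proof. apply Nat2Z.inj. rewrite Z2Nat.id by (pose proof (Xk_ge1 k); lia).
  rewrite <- Xk_S. unfold Xk. rewrite Nat2Z.inj_pow. reflexivity. Qed.

Lemma Gb_le k : Gb (Xk k) <= 7 * IZR (Xk k) * (INR k + 2) ^ 2.
Proof. unfold Gb. rewrite Xk_nat. pose proof (Hs_pow (S k)) as H. rewrite S_INR in H.
  pose proof (Hs_nonneg (2 ^ S k)). assert (1 <= IZR (Xk k)) by (apply IZR_le; apply Xk_ge1).
  pose proof (pos_INR k).
  set (H0v := Hs (2 ^ S k)) in *. set (Y := IZR (Xk k)) in *.
  assert (H0v <= INR k + 2) by lra.
  assert (2 * H0v * (Y * H0v + 2 * Y) <= 2 * (INR k + 2) * (Y * (INR k + 2) + 2 * Y)).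
  { apply Rmult_le_compat. lra. nra. lra. nra. }
  nra. Qed.

Lemma inBox_mono X Y p : (X <= Y)%Z -> inBox X p -> inBox Y p.
Proof. unfold inBox. lia. Qed.

Definition iota (a : R) (j0 k : nat) : R := 14 * INR (Mb a j0 k) * (INR k + 2) ^ 2 / IZR (Xk k).

Definition goodB (a : R) (j0 k : nat) (P B : list (Z*Z)) : Prop :=
  length B = mm a j0 k /\ GPl (B ++ P) /\ (forall z, In z B -> inR (Xk k) z) /\
  T (B ++ P) <= T P + INR (mm a j0 k) * iota a j0 k.

Fixpoint Q (a : R) (j0 k : nat) : list (Z*Z) :=
  match k with
  | 0 => []
  | S k' => if Nat.leb j0 (S k') then epsilon (inhabits []) (goodB a j0 (S k') (Q a j0 k')) ++ Q a j0 k'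
            else Q a j0 k'
  end.

Definition blk (a : R) (j0 k : nat) : list (Z*Z) := epsilon (inhabits []) (goodB a j0 k (Q a j0 (pred k))).

Definition Inv (a : R) (j0 k : nat) : Prop :=
  GPl (Q a j0 k) /\ (forall p, In p (Q a j0 k) -> inBox (Xk k) p) /\ length (Q a j0 k) = Mb a j0 k /\
  T (Q a j0 k) <= 1008 * cc ^ 2 * 2 ^ k.

Lemma mi_bound a j0 j : 1 <= a -> (1 <= j0)%nat -> 3 * a <= INR j0 -> (j0 <= j)%nat ->
  INR (mm a j0 j) * iota a j0 j <= 504 * cc ^ 2 * 2 ^ j.
Proof. intros Ha Hj0 Hr Hk. set (X := Xk j).
  assert (HXr : IZR X = 2 ^ j) by apply Xk_IZR.
  assert (Hpj : 1 <= 2 ^ j) by (apply pow_R1_Rle; lra).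
  assert (Hj1 : (1 <= j)%nat) by lia.
  pose proof (lam_pos a j Hj1) as Hl. pose proof (lam_ge a j Ha Hj1) as Hlg.
  assert (HjR : 1 <= INR j) by (apply (le_INR 1); lia).
  pose proof (mm_le a j0 j Hj1) as Hm.
  pose proof (Mb_le a j0 j Ha Hj0 Hr Hk) as HM.
  pose proof (pos_INR (mm a j0 j)) as Hm0. pose proof (pos_INR (Mb a j0 j)) as HM0.
  assert (Hc : 0 < cc) by (unfold cc; lra).
 unfold iota. fold X. rewrite HXr.
    assert (Hq : (INR j + 2) ^ 2 <= 9 * lam a j ^ 2) by nra.
    set (L := lam a j) in *. set (P2 := 2 ^ j) in *.
    assert (A1 : INR (mm a j0 j) * L <= cc * P2) by (apply (Rmult_le_reg_r (/ L)); [apply Rinv_0_lt_compat; lra|]; 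
                 rewrite Rmult_assoc, Rinv_r, Rmult_1_r by lra; exact Hm).
    assert (A2 : INR (Mb a j0 j) * L <= 4 * cc * P2) by (apply (Rmult_le_reg_r (/ L)); [apply Rinv_0_lt_compat; lra|]; 
                 rewrite Rmult_assoc, Rinv_r, Rmult_1_r by lra; exact HM).
    replace (INR (mm a j0 j) * (14 * INR (Mb a j0 j) * (INR j + 2) ^ 2 / P2))
      with (14 * (INR (mm a j0 j) * INR (Mb a j0 j)) * (INR j + 2) ^ 2 / P2) by (field; lra).
    apply (Rmult_le_reg_r P2). lra.
    replace (14 * (INR (mm a j0 j) * INR (Mb a j0 j)) * (INR j + 2) ^ 2 / P2 * P2)
      with (14 * (INR (mm a j0 j) * INR (Mb a j0 j)) * (INR j + 2) ^ 2) by (field; lra).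
    assert (A3 : INR (mm a j0 j) * INR (Mb a j0 j) * L^2 <= 4 * cc^2 * P2^2).
    { replace (INR (mm a j0 j) * INR (Mb a j0 j) * L^2) with ((INR (mm a j0 j) * L) * (INR (Mb a j0 j) * L)) by ring.
      replace (4 * cc^2 * P2^2) with ((cc * P2) * (4 * cc * P2)) by ring.
      apply Rmult_le_compat; try nra. }
    assert (14 * (INR (mm a j0 j) * INR (Mb a j0 j)) * (INR j + 2) ^ 2 <= 14 * (INR (mm a j0 j) * INR (Mb a j0 j)) * (9 * L^2)).
    { apply Rmult_le_compat_l; auto. apply Rmult_le_pos; [lra|]. apply Rmult_le_pos; auto. }
    nra. Qed.

Lemma step_ok a j0 k : 1 <= a -> (1 <= j0)%nat -> 3 * a <= INR j0 -> (j0 <= S k)%nat -> Inv a j0 k ->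
  exists B, goodB a j0 (S k) (Q a j0 k) B.
Proof. intros Ha Hj0 Hr Hk [I1 [I2 [I3 I4]]].
  set (j := S k) in *. set (X := Xk j).
  assert (HX : (1 <= X)%Z) by apply Xk_ge1.
  assert (HXr : IZR X = 2 ^ j) by apply Xk_IZR.
  assert (Hpj : 1 <= 2 ^ j) by (apply pow_R1_Rle; lra).
  assert (Hj1 : (1 <= j)%nat) by lia.
  pose proof (lam_pos a j Hj1) as Hl. pose proof (lam_ge a j Ha Hj1) as Hlg.
  assert (HjR : 1 <= INR j) by (apply (le_INR 1); lia).
  assert (Hc : cc = 1/200) by reflexivity.
  pose proof (mm_le a j0 j Hj1) as Hm.
  pose proof (Mb_le a j0 j Ha Hj0 Hr Hk) as HM.
  pose proof (pos_INR (mm a j0 j)) as Hm0. pose proof (pos_INR (Mb a j0 j)) as HM0.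
  assert (Hio : 2 * INR (Mb a j0 j) * Gb X / (IZR X * IZR X) <= iota a j0 j).
  { unfold iota. fold X. pose proof (Gb_le j) as G. fold X in G.
    assert (0 < IZR X) by lra.
    apply (Rmult_le_reg_r (IZR X * IZR X)). nra.
    replace (2 * INR (Mb a j0 j) * Gb X / (IZR X * IZR X) * (IZR X * IZR X)) with (2 * INR (Mb a j0 j) * Gb X) by (field; lra).
    replace (14 * INR (Mb a j0 j) * (INR j + 2) ^ 2 / IZR X * (IZR X * IZR X)) with (2 * INR (Mb a j0 j) * (7 * IZR X * (INR j + 2)^2)) by (field; lra).
    apply Rmult_le_compat_l; lra. }
  assert (Hmi : INR (mm a j0 j) * iota a j0 j <= 504 * cc ^ 2 * 2 ^ j) by (apply mi_bound; auto).
  destruct (block X HX (mm a j0 j) (Q a j0 k) I1) with (Mbk := Mb a j0 j) (Tmax := 1008 * cc ^ 2 * 2 ^ j) (iota := iota a j0 j)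
    as [B HB].
  - intros p Hp. apply (inBox_mono (Xk k)). unfold X, j. rewrite Xk_S. pose proof (Xk_ge1 k). lia. auto.
  - rewrite I3. unfold j. simpl Mb. lia.
  - auto.
  - assert (E2 : 2 ^ j = 2 * 2 ^ k) by (unfold j; simpl; ring). rewrite E2 in *. lra.
  - rewrite HXr. 
    assert (INR (Mb a j0 j) <= 4 * cc * 2 ^ j).
    { eapply Rle_trans; [exact HM|]. unfold Rdiv. rewrite Hc.
      assert (/ lam a j <= 1). { rewrite <- Rinv_1. apply Rinv_le_contravar; lra. }
      assert (0 <= 4 * (1/200) * 2^j) by lra. nra. }
    rewrite Hc in *. nra.
  - exists B. exact HB.
Qed.

Lemma Inv_all a j0 k : 1 <= a -> (1 <= j0)%nat -> 3 * a <= INR j0 -> Inv a j0 k.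
Proof. intros Ha Hj0 Hr. induction k.
  - unfold Inv. cbn [Q]. split; [|split; [|split]].
    + simpl; auto.
    + intros; contradiction.
    + rewrite Mb_zero by lia. reflexivity.
    + simpl. assert (0 <= cc ^ 2) by (apply pow_le; unfold cc; lra). lra.
  - destruct (Nat.leb_spec j0 (S k)) as [Hk|Hk].
    + destruct (step_ok a j0 k Ha Hj0 Hr Hk IHk) as [B0 HB0].
      pose proof (epsilon_spec (inhabits []) (goodB a j0 (S k) (Q a j0 k)) (ex_intro _ B0 HB0)) as HB.
      set (B := epsilon (inhabits []) (goodB a j0 (S k) (Q a j0 k))) in *.
      assert (EQ : Q a j0 (S k) = B ++ Q a j0 k).
      { simpl. replace (Nat.leb j0 (S k)) with true by (symmetry; apply Nat.leb_le; auto). reflexivity. }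
      destruct IHk as [I1 [I2 [I3 I4]]]. destruct HB as [B1 [B2 [B3 B4]]].
      unfold Inv. rewrite EQ. split; [|split; [|split]].
      * auto.
      * intros p Hp. apply in_app_or in Hp. destruct Hp as [Hp|Hp].
        -- apply inR_inBox. apply Xk_ge1. auto.
        -- apply (inBox_mono (Xk k)). rewrite Xk_S. pose proof (Xk_ge1 k). lia. auto.
      * rewrite length_app, B1, I3. simpl. lia.
      * pose proof (mi_bound a j0 (S k) Ha Hj0 Hr Hk). simpl pow in *. lra.
    + assert (EQ : Q a j0 (S k) = Q a j0 k).
      { simpl. replace (Nat.leb j0 (S k)) with false by (symmetry; apply Nat.leb_gt; auto). reflexivity. }
      destruct IHk as [I1 [I2 [I3 I4]]].
      unfold Inv. rewrite EQ. split; [|split; [|split]]; auto.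
      * intros p Hp. apply (inBox_mono (Xk k)). rewrite Xk_S. pose proof (Xk_ge1 k). lia. auto.
      * rewrite I3. rewrite !Mb_zero by lia. auto.
      * simpl pow. assert (0 <= cc ^ 2 * 2 ^ k) by (apply Rmult_le_pos; apply pow_le; unfold cc; lra). lra.
Qed.

Lemma NoDup_app_l {A} (l1 l2 : list A) : NoDup (l1 ++ l2) -> NoDup l1.
Proof. induction l1; simpl; intros H. constructor. inversion H; subst. constructor; auto.
  intro; apply H2; apply in_or_app; auto. Qed.


Lemma Q_step a j0 k : (j0 <= S k)%nat -> Q a j0 (S k) = blk a j0 (S k) ++ Q a j0 k.
Proof. intros H. simpl. replace (Nat.leb j0 (S k)) with true by (symmetry; apply Nat.leb_le; auto). reflexivity. Qed.

Lemma Q_step0 a j0 k : (S k < j0)%nat -> Q a j0 (S k) = Q a j0 k.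
Proof. intros H. simpl. replace (Nat.leb j0 (S k)) with false by (symmetry; apply Nat.leb_gt; auto). reflexivity. Qed.

Lemma blk_good a j0 k : 1 <= a -> (1 <= j0)%nat -> 3 * a <= INR j0 -> (j0 <= S k)%nat ->
  goodB a j0 (S k) (Q a j0 k) (blk a j0 (S k)).
Proof. intros Ha Hj0 Hr Hk. destruct (step_ok a j0 k Ha Hj0 Hr Hk (Inv_all a j0 k Ha Hj0 Hr)) as [B HB].
  apply (epsilon_spec (inhabits []) (goodB a j0 (S k) (Q a j0 k)) (ex_intro _ B HB)). Qed.

Lemma Q_mono a j0 j k : (j <= k)%nat -> incl (Q a j0 j) (Q a j0 k).
Proof. intros H. induction H. apply incl_refl.
  destruct (Nat.leb_spec j0 (S m)).
  - rewrite Q_step by auto. intros x Hx. apply in_or_app. right. auto.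
  - rewrite Q_step0 by auto. auto. Qed.

Lemma Q_origin a j0 k : 1 <= a -> (1 <= j0)%nat -> 3 * a <= INR j0 ->
  forall p, In p (Q a j0 k) -> exists j, (j <= k)%nat /\ inR (Xk j) p /\ In p (Q a j0 j).
Proof. intros Ha Hj0 Hr. induction k; intros p Hp. simpl in Hp; contradiction.
  destruct (Nat.leb_spec j0 (S k)).
  - rewrite Q_step in Hp by auto. apply in_app_or in Hp. destruct Hp as [Hp|Hp].
    + exists (S k). split; auto. split.
      * destruct (blk_good a j0 k Ha Hj0 Hr H) as [_ [_ [G _]]]. auto.
      * rewrite Q_step by auto. apply in_or_app; auto.
    + destruct (IHk p Hp) as [j [Hj1 Hj2]]. exists j. split; auto.
  - rewrite Q_step0 in Hp by auto. destruct (IHk p Hp) as [j [Hj1 Hj2]]. exists j. split; auto.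
Qed.

Lemma inR_log2 j p : inR (Xk j) p -> Z.log2 (fst p) = Z.of_nat j.
Proof. intros [H1 H2]. apply Z.log2_unique. lia. unfold Xk in *.
  rewrite Z.pow_succ_r by lia. lia. Qed.

Definition Sset (a : R) (j0 : nat) (x y : Z) : bool :=
  if Z.leb 1 x then inb (x, y) (Q a j0 (Z.to_nat (Z.log2 x))) else false.

Lemma Sset_Q a j0 x y : Sset a j0 x y = true -> In (x, y) (Q a j0 (Z.to_nat (Z.log2 x))).
Proof. unfold Sset, inb. destruct (Z.leb 1 x); [|discriminate]. destruct (in_dec peq_dec (x,y) _); auto; discriminate. Qed.

Lemma Q_Sset a j0 k p : 1 <= a -> (1 <= j0)%nat -> 3 * a <= INR j0 ->
  In p (Q a j0 k) -> Sset a j0 (fst p) (snd p) = true.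
Proof. intros Ha Hj0 Hr Hp. destruct (Q_origin a j0 k Ha Hj0 Hr p Hp) as [j [_ [HR HQ]]].
  unfold Sset. pose proof (Xk_ge1 j). destruct HR as [HR1 HR2].
  replace (Z.leb 1 (fst p)) with true by (symmetry; apply Z.leb_le; lia).
  rewrite (inR_log2 j p) by (split; auto). rewrite Nat2Z.id. unfold inb.
  destruct p as [x y]. cbn [fst snd]. destruct (in_dec peq_dec (x,y) (Q a j0 j)); [auto|contradiction]. Qed.

Lemma S_GP a j0 : 1 <= a -> (1 <= j0)%nat -> 3 * a <= INR j0 -> general_position (Sset a j0).
Proof. intros Ha Hj0 Hr p q r Hp Hq Hr' Hpq Hqr Hpr Hcol.
  apply Sset_Q in Hp, Hq, Hr'. destruct p as [p1 p2], q as [q1 q2], r as [r1 r2]. cbn [fst snd] in *.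
  set (kp := Z.to_nat (Z.log2 p1)) in *. set (kq := Z.to_nat (Z.log2 q1)) in *. set (kr := Z.to_nat (Z.log2 r1)) in *.
  set (K := Nat.max kp (Nat.max kq kr)).
  assert (Hp' : In (p1,p2) (Q a j0 K)) by (apply (Q_mono a j0 kp); [lia|auto]).
  assert (Hq' : In (q1,q2) (Q a j0 K)) by (apply (Q_mono a j0 kq); [lia|auto]).
  assert (Hr2 : In (r1,r2) (Q a j0 K)) by (apply (Q_mono a j0 kr); [lia|auto]).
  destruct (Inv_all a j0 K Ha Hj0 Hr) as [G _].
  apply (GPl_spec _ G _ _ _ Hp' Hq' Hr2 Hpq Hqr Hpr). exact Hcol.
Qed.

Lemma grid_In n p : In p (grid n) <-> (1 <= fst p <= Z.of_nat n /\ 1 <= snd p <= Z.of_nat n)%Z.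
Proof. destruct p as [x y]. unfold grid. rewrite in_prod_iff, !in_map_iff. cbn [fst snd]. split.
  - intros [[i [Ei Hi]] [j [Ej Hj]]]. apply in_seq in Hi, Hj. lia.
  - intros H. split; [exists (Z.to_nat x)|exists (Z.to_nat y)]; split; try lia; apply in_seq; lia. Qed.

Lemma grid_NoDup n : NoDup (grid n).
Proof. unfold grid. apply NoDup_prod; apply NoDup_map_NoDup_ForallPairs; try (intros x y _ _ E; lia); apply seq_NoDup. Qed.

Lemma count_lower a j0 K n : 1 <= a -> (1 <= j0)%nat -> 3 * a <= INR j0 -> (j0 <= K)%nat -> (1 <= K)%nat ->
  (2 ^ S K <= n)%nat -> (mm a j0 K <= count_in_box (Sset a j0) n)%nat.
Proof. intros Ha Hj0 Hr HK HK1 Hn.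
  destruct K as [|k]; [lia|].
  destruct (blk_good a j0 k Ha Hj0 Hr HK) as [B1 [B2 [B3 _]]].
  rewrite <- B1. unfold count_in_box. apply NoDup_incl_length.
  - apply GPl_NoDup in B2. apply NoDup_app_l in B2. auto.
  - intros p Hp. apply filter_In. split.
    + apply grid_In. pose proof (B3 p Hp) as [H1 H2].
      assert (E : Z.of_nat (2 ^ S (S k)) = (2 * Xk (S k))%Z).
      { rewrite <- Xk_S. unfold Xk. rewrite Nat2Z.inj_pow. reflexivity. }
      apply inj_le in Hn. pose proof (Xk_ge1 (S k)). lia.
    + apply (Q_Sset a j0 (S k)); auto. rewrite Q_step by auto. apply in_or_app; auto.
Qed.

Lemma count_upper a j0 K n : 1 <= a -> (1 <= j0)%nat -> 3 * a <= INR j0 ->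
  (n < 2 ^ S K)%nat -> (count_in_box (Sset a j0) n <= Mb a j0 K)%nat.
Proof. intros Ha Hj0 Hr Hn.
  destruct (Inv_all a j0 K Ha Hj0 Hr) as [_ [_ [I3 _]]]. rewrite <- I3.
  unfold count_in_box. apply NoDup_incl_length.
  - apply NoDup_filter, grid_NoDup.
  - intros [x y] Hp. apply filter_In in Hp. destruct Hp as [Hg HS]. cbn [fst snd] in HS.
    apply grid_In in Hg. cbn [fst snd] in Hg.
    apply Sset_Q in HS. apply (Q_mono a j0 (Z.to_nat (Z.log2 x))); auto.
    assert (Z.log2 x < Z.of_nat (S K))%Z.
    { apply Z.log2_lt_pow2. lia. apply inj_lt in Hn. rewrite Nat2Z.inj_pow in Hn. simpl (Z.of_nat 2) in Hn. lia. }
    pose proof (Z.log2_nonneg x). lia.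
Qed.

Lemma growth a j0 : 1 <= a -> (1 <= j0)%nat -> 3 * a <= INR j0 ->
  forall m, 2 ^ j0 / lam a j0 * (1 + INR m / 3) <= 2 ^ (j0 + m) / lam a (j0 + m).
Proof. intros Ha Hj0 Hr. 
  assert (Hf0 : 0 < 2 ^ j0 / lam a j0) by (apply Rdiv_lt_0_compat; [apply pow_lt; lra|apply lam_pos; lia]).
  induction m.
  - rewrite Nat.add_0_r. simpl. lra.
  - rewrite Nat.add_succ_r. set (K := (j0 + m)%nat) in *.
    assert (HK : (1 <= K)%nat) by (unfold K; lia).
    pose proof (lam_pos a K HK). pose proof (lam_pos a (S K) ltac:(lia)).
    assert (Rat : lam a (S K) <= 3/2 * lam a K).
    { apply lam_ratio; auto. apply Rle_trans with (INR j0); auto. apply le_INR. unfold K; lia. }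
    assert (Step : 4/3 * (2 ^ K / lam a K) <= 2 ^ S K / lam a (S K)).
    { simpl (2 ^ S K). apply (Rmult_le_reg_r (lam a K * lam a (S K))). nra.
      replace (4 / 3 * (2 ^ K / lam a K) * (lam a K * lam a (S K))) with (4/3 * 2^K * lam a (S K)) by (field; lra).
      replace (2 * 2 ^ K / lam a (S K) * (lam a K * lam a (S K))) with (2 * 2^K * lam a K) by (field; lra).
      assert (0 < 2 ^ K) by (apply pow_lt; lra). nra. }
    rewrite S_INR.
    assert (2 ^ j0 / lam a j0 <= 2 ^ K / lam a K).
    { eapply Rle_trans; [|exact IHm]. pose proof (pos_INR m).
      assert (0 <= 2 ^ j0 / lam a j0 * (INR m / 3)) by (apply Rmult_le_pos; lra). nra. }
    nra.
Qed.

Lemma INR_pow2 k : INR (2 ^ k) = 2 ^ k.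
Proof. rewrite pow_INR. reflexivity. Qed.

Lemma ln2_bounds : 0 < ln 2 < 1.
Proof. split. pose proof ln_lt_2. lra.
  pose proof (exp_ineq1 1 ltac:(lra)). rewrite <- (ln_exp 1). apply ln_increasing; lra. Qed.

Lemma ln_le x y : 0 < x -> x <= y -> ln x <= ln y.
Proof. intros H [H1|H1]. left; apply ln_increasing; auto. subst; lra. Qed.

Theorem theorem1p3 :
  forall eps : R, 0 < eps ->
  exists S : Z -> Z -> bool,
    general_position S /\
    exists c C : R, 0 < c /\ 0 < C /\
    exists N : nat, (2 <= N)%nat /\
    forall n : nat, (N <= n)%nat ->
      c * INR n / Rpower (ln (INR n)) (1 + eps) <= INR (count_in_box S n) /\
      INR (count_in_box S n) <= C * INR n / Rpower (ln (INR n)) (1 + eps).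
Proof.
  intros eps Heps. set (a := 1 + eps).
  assert (Ha : 1 <= a) by (unfold a; lra).
  destruct (archimed (3 * a)) as [Hup _].
  set (j0 := Z.to_nat (up (3 * a))).
  assert (Hup0 : (0 < up (3 * a))%Z) by (apply lt_IZR; lra).
  assert (Hr : 3 * a <= INR j0) by (unfold j0; rewrite INR_IZR_INZ, Z2Nat.id by lia; lra).
  assert (Hj0 : (1 <= j0)%nat) by (apply INR_le; simpl; lra).
  set (f0 := 2 ^ j0 / lam a j0).
  assert (Hf0 : 0 < f0) by (apply Rdiv_lt_0_compat; [apply pow_lt; lra|apply lam_pos; lia]).
  destruct (archimed (1200 / f0)) as [Hup2 _].
  assert (Hup20 : (0 < up (1200 / f0))%Z). { apply lt_IZR. assert (0 < 1200 / f0) by (apply Rdiv_lt_0_compat; lra). lra. }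
  set (m := Z.to_nat (up (1200 / f0))).
  assert (Hm : 1200 / f0 <= INR m) by (unfold m; rewrite INR_IZR_INZ, Z2Nat.id by lia; lra).
  set (j1 := (j0 + m)%nat).
  exists (Sset a j0). split. apply S_GP; auto.
  pose proof ln2_bounds as [Hl2a Hl2b].
  set (ell := Rpower (ln 2) a).
  assert (Hell : 0 < ell) by (unfold ell, Rpower; apply exp_pos).
  assert (Hcc : cc = 1/200) by reflexivity.
  exists (cc * ell / 8), (6 * cc). split. rewrite Hcc; apply Rdiv_lt_0_compat; [apply Rmult_lt_0_compat|]; lra.
  split. rewrite Hcc; lra.
  exists (2 ^ S j1)%nat. split. { simpl. pose proof (Nat.pow_nonzero 2 j1). lia. }
  intros n Hn.
  assert (Hn0 : (0 < n)%nat) by (pose proof (Nat.pow_nonzero 2 (S j1)); lia).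
  destruct (Nat.log2_spec n Hn0) as [HL1 HL2].
  set (L := Nat.log2 n) in *.
  assert (HLj : (S j1 <= L)%nat).
  { destruct (Nat.le_gt_cases (S j1) L); auto.
    assert (2 ^ S L <= 2 ^ S j1)%nat by (apply Nat.pow_le_mono_r; lia). lia. }
  destruct L as [|K] eqn:EL; [lia|].
  assert (HK : (j1 <= K)%nat) by lia.
  assert (HK1 : (1 <= K)%nat) by (unfold j1 in HK; lia).
  assert (HKj0 : (j0 <= K)%nat) by (unfold j1 in HK; lia).
  assert (HnR1 : 2 ^ S K <= INR n) by (rewrite <- INR_pow2; apply le_INR; exact HL1).
  assert (HnR2 : INR n < 2 ^ S (S K)) by (rewrite <- INR_pow2; apply lt_INR; exact HL2).
  assert (H2K : 0 < 2 ^ K) by (apply pow_lt; lra).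
  assert (H2K1 : 1 <= 2 ^ K) by (apply pow_R1_Rle; lra).
  assert (Hln0 : 0 < ln (INR n)).
  { rewrite <- ln_1. apply ln_increasing. lra. simpl in HnR1. lra. }
  assert (Hlnlo : INR (S K) * ln 2 <= ln (INR n)).
  { rewrite <- ln_pow by lra. apply ln_le. apply pow_lt; lra. lra. }
  assert (Hlnhi : ln (INR n) <= INR (S (S K)) * ln 2).
  { rewrite <- ln_pow by lra. apply ln_le. simpl in HnR1; lra. lra. }
  set (Rp := Rpower (ln (INR n)) (1 + eps)).
  assert (HRp : 0 < Rp) by (unfold Rp, Rpower; apply exp_pos).
  fold a in Rp. 
  split.
  -
    eapply Rle_trans; [|apply le_INR; apply (count_lower a j0 K n); auto].
    pose proof (mm_ge a j0 K HK1 HKj0) as Hmm.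
    pose proof (growth a j0 Ha Hj0 Hr (K - j0)) as Gr. replace (j0 + (K - j0))%nat with K in Gr by lia.
    fold f0 in Gr.
    assert (HKm : INR m <= INR (K - j0)) by (apply le_INR; unfold j1 in HK; lia).
    assert (HfK : 400 <= 2 ^ K / lam a K).
    { assert (1200 <= f0 * INR m).
      { apply (Rmult_le_reg_r (/ f0)). apply Rinv_0_lt_compat; lra.
        replace (f0 * INR m * / f0) with (INR m) by (field; lra). exact Hm. }
      nra. }
    pose proof (lam_pos a K HK1) as HlK.
    assert (HRpK : lam a K * ell <= Rp).
    { unfold lam, ell. rewrite Rpower_mult_distr by (try apply (lt_INR 0); try lia; lra).
      apply Rle_Rpower_l. lra. split. apply Rmult_lt_0_compat; [apply (lt_INR 0); lia|lra].
      rewrite S_INR in Hlnlo. nra. }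
    assert (Goal1 : cc * ell / 8 * INR n / Rp <= cc * (2 ^ K / lam a K) / 2).
    { apply (Rmult_le_reg_r Rp); auto.
      replace (cc * ell / 8 * INR n / Rp * Rp) with (cc * ell / 8 * INR n) by (field; lra).
      assert (INR n <= 4 * 2^K) by (simpl in HnR2; lra).
      assert (cc * ell / 8 * INR n <= cc * ell / 2 * 2^K) by (rewrite Hcc; nra).
      assert (cc * (2 ^ K / lam a K) / 2 * (lam a K * ell) = cc * ell / 2 * 2^K) by (field; lra).
      assert (0 <= cc * (2 ^ K / lam a K) / 2) by (rewrite Hcc; lra).
      nra. }
    fold Rp. assert (EE : cc * 2 ^ K / lam a K = cc * (2 ^ K / lam a K)) by (field; lra).
    rewrite EE in Hmm. rewrite Hcc in *. lra.
  -
    eapply Rle_trans; [apply le_INR; apply (count_upper a j0 (S K) n); auto|].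
    pose proof (Mb_le a j0 (S K) Ha Hj0 Hr ltac:(lia)) as HM.
    pose proof (lam_pos a (S K) ltac:(lia)) as HlK.
    assert (Rat : lam a (S (S K)) <= 3/2 * lam a (S K)).
    { apply lam_ratio; [auto|lia|]. apply Rle_trans with (INR j0); auto. apply le_INR. lia. }
    assert (HRpK : Rp <= lam a (S (S K))).
    { unfold lam, Rp. fold a. apply Rle_Rpower_l. lra. split; auto. nra. }
    assert (Goal2 : 4 * cc * 2 ^ S K / lam a (S K) <= 6 * cc * INR n / Rp).
    { apply (Rmult_le_reg_r Rp); auto.
      replace (6 * cc * INR n / Rp * Rp) with (6 * cc * INR n) by (field; lra).
      assert (4 * cc * 2 ^ S K / lam a (S K) * Rp <= 4 * cc * 2 ^ S K / lam a (S K) * (3/2 * lam a (S K))).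
      { apply Rmult_le_compat_l. rewrite Hcc. apply Rmult_le_pos. assert (0 < 2 ^ S K) by (apply pow_lt; lra). lra.
        left; apply Rinv_0_lt_compat; lra. lra. }
      assert (4 * cc * 2 ^ S K / lam a (S K) * (3/2 * lam a (S K)) = 6 * cc * 2 ^ S K) by (field; lra).
      rewrite Hcc in *. lra. }
    fold Rp. lra.
Qed.
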